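(* There exists a self-affine sponge $F\subset[0,1]^4$ satisfying the very strong SPPC for which $\mathcal B\subsetneq\mathcal A$. Nonetheless, for this sponge, $\max_{\sigma\in\mathcal B}\overline S(\mathbf p,\sigma)=\max_{\sigma\in\mathcal A}\overline S(\mathbf p,\sigma)$ for every probability vector $\mathbf p$ with strictly positive entries.
   Context: Setting: $d=4$, $\mathcal I=\{1,\dots,N\}$, $f_i(x)=A_ix+t_i$ on $\mathbb R^4$ with $A_i=\mathrm{diag}(\lambda_i^{(1)},\dots,\lambda_i^{(4)})$, all $\lambda_i^{(n)}\in(0,1)$, $f_i([0,1]^4)\subset[0,1]^4$, no two maps agree on $[0,1]^4$, and for all $m\ne n$ there is $i$ with $\lambda_i^{(n)}\ne\lambda_i^{(m)}$; $F$ is the attractor. $\Sigma=\mathcal I^{\mathbb N}$. For $\mathbf i\in\Sigma$, $r>0$, $L_{\mathbf i}(r,n)$ is the unique integer with $\prod_{\ell=1}^{L_{\mathbf i}(r,n)}\lambda_{i_\ell}^{(n)}\le r<\prod_{\ell=1}^{L_{\mathbf i}(r,n)-1}\lambda_{i_\ell}^{(n)}$. For a permutation $\sigma$ of $\{1,\dots,d\}$: $\mathbf i$ determines a strictly $\sigma$-ordered cylinder at scale $r$ if, with $L=L_{\mathbf i}(r,\sigma_d)$, $\prod_{\ell=1}^L\lambda_{i_\ell}^{(\sigma_d)}<\dots<\prod_{\ell=1}^L\lambda_{i_\ell}^{(\sigma_1)}$; $\mathbf i$ determines a $\sigma$-ordered cube at scale $r$ if $L_{\mathbf i}(r,\sigma_d)\le\dots\le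 L_{\mathbf i}(r,\sigma_1)$, with ties resolved by: if coordinates $k<m$ have $L_{\mathbf i}(r,k)=L_{\mathbf i}(r,m)$, then $k$ precedes $m$ iff $\prod_{\ell=1}^{L_{\mathbf i}(r,k)}\lambda_{i_\ell}^{(k)}\ge\prod_{\ell=1}^{L_{\mathbf i}(r,k)}\lambda_{i_\ell}^{(m)}$. $\mathcal A$ (resp. $\mathcal B$) is the set of $\sigma$ for which some $\mathbf i,r$ determine a $\sigma$-ordered cube (resp. strictly $\sigma$-ordered cylinder) at scale $r$. $E_n^\sigma$ is the span of coordinate axes $\sigma_1,\dots,\sigma_n$, $\Pi_n^\sigma$ the orthogonal projection onto it; $f_i,f_j$ overlap exactly on $E_n^\sigma$ if $\Pi_n^\sigma f_i=\Pi_n^\sigma f_j$ on $[0,1]^d$. Very strong SPPC: for all $\sigma\in\mathcal A$, $1\le n\le d$, $i,j$, either $f_i,f_j$ overlap exactly on $E_n^\sigma$ or $\Pi_n^\sigma(f_i([0,1]^d))\cap\Pi_n^\sigma(f_j([0,1]^d))=\emptyset$. For $\sigma\in\mathcal S_d$ and $1\le n\le d-1$, $\mathcal I_n^\sigma$ is the set of $j$ with no $i<j$ such that $f_i,f_j$ overlap exactly on $E_n^\sigma$; $\mathcal I_d^\sigma=\mathcal I$; $\Pi_n^\sigma j$ is the unique element of $\mathcal I_n^\sigma$ overlapping exactly with $j$ on $E_n^\sigma$ ($\Pi_d^\sigma=\mathrm{id}$, $\Pi_0^\sigma j=\emptyset$). $p_n^\sigma(i)=\sum_{j:\Pi_n^\sigma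 j=i}p(j)$ for $i\in\mathcal I_n^\sigma$, $p_0^\sigma(\emptyset)=1$, $P_{n-1}^\sigma(i)=p_n^\sigma(i)/p_{n-1}^\sigma(\Pi_{n-1}^\sigma i)$ for $i\in\mathcal I_n^\sigma$, and $\overline S(\mathbf p,\sigma)=\sum_{n=1}^d\max_{i\in\mathcal I_n^\sigma}\frac{\log P^\sigma_{n-1}(i)}{\log\lambda_i^{(\sigma_n)}}$. *)

(* Defs.v *)
From HB Require Import structures.
From mathcomp Require Import all_boot all_order all_algebra.
From mathcomp Require Import fingroup perm.
From mathcomp Require Import boolp reals exp.

Set Implicit Arguments.
Unset Strict Implicit.
Unset Printing Implicit Defensive.

Import Order.TTheory GRing.Theory Num.Theory.
Local Open Scope ring_scope.

(* Ambient dimension d = 4; coordinates 1..4 are represented by 'I_4 (0..3). *)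
Notation sdim := 4%N.

(* A diagonal IFS on R^4: N maps, f_i(x) = A_i x + t_i, A_i = diag(lam i). *)
Record IFS (R : realType) := MkIFS {
  N : nat;
  lam : 'I_N -> 'I_sdim -> R;
  tr : 'I_N -> 'I_sdim -> R }.
Arguments N {R} i.
Arguments lam {R} i _ _.
Arguments tr {R} i _ _.

Section Sponge.
Variable R : realType.
Variable S : IFS R.

Definition pt := 'I_sdim -> R.

Definition fmap (i : 'I_(N S)) (x : pt) : pt :=
  fun c => lam S i c * x c + tr S i c.

Definition in_cube (x : pt) : Prop := forall c, 0 <= x c <= 1.

Definition sponge_assumptions : Prop :=
  [/\ (forall i c, 0 < lam S i c < 1),
      (forall i x, in_cube x -> in_cube (fmap i x)),
      (forall i j, i != j -> ~ (forall x, in_cube x -> fmap i x = fmap j x)) &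
      (forall m n : 'I_sdim, m != n -> exists i, lam S i n != lam S i m)].

(* Codings: i = (i_1, i_2, ...) is represented by w : nat -> 'I_N, i_l = w (l-1). *)
Definition cylprod (w : nat -> 'I_(N S)) (n : 'I_sdim) (L : nat) : R :=
  \prod_(l < L) lam S (w l) n.

Definition isL (w : nat -> 'I_(N S)) (r : R) (n : 'I_sdim) (L : nat) : Prop :=
  (0 < L)%N /\ cylprod w n L <= r < cylprod w n L.-1.

(* sigma_k (k = 1..4) is sigma (k-1). "k precedes m" in sigma means
   sigma^-1 k < sigma^-1 m. *)
Definition sigma_ordered_cube (s : 'S_sdim) (w : nat -> 'I_(N S)) (r : R) : Prop :=
  exists Ls : 'I_sdim -> nat,
    [/\ (forall c, isL w r c (Ls c)),
        (forall a b : 'I_sdim, (a < b)%N -> (Ls (s b) <= Ls (s a))%N) &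
        (forall k m : 'I_sdim, (k < m)%N -> Ls k = Ls m ->
           ((s^-1)%g k < (s^-1)%g m)%N <-> cylprod w m (Ls k) <= cylprod w k (Ls k))].

Definition strictly_sigma_ordered_cyl (s : 'S_sdim) (w : nat -> 'I_(N S)) (r : R) : Prop :=
  exists L, isL w r (s ord_max) L /\
    (forall a b : 'I_sdim, (a < b)%N -> cylprod w (s b) L < cylprod w (s a) L).

Definition in_A (s : 'S_sdim) : Prop :=
  exists (w : nat -> 'I_(N S)) (r : R), 0 < r /\ sigma_ordered_cube s w r.

Definition in_B (s : 'S_sdim) : Prop :=
  exists (w : nat -> 'I_(N S)) (r : R), 0 < r /\ strictly_sigma_ordered_cyl s w r.

(* Orthogonal projection onto E_n^sigma = span of axes sigma_1..sigma_n. *)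
Definition proj (s : 'S_sdim) (n : nat) (x : pt) : pt :=
  fun c => if ((s^-1)%g c < n)%N then x c else 0.

Definition overlap_exactly (s : 'S_sdim) (n : nat) (i j : 'I_(N S)) : Prop :=
  forall x, in_cube x -> proj s n (fmap i x) = proj s n (fmap j x).

Definition very_strong_SPPC : Prop :=
  forall s, in_A s -> forall n, (1 <= n <= sdim)%N -> forall i j,
    overlap_exactly s n i j \/
    ~ (exists x y, [/\ in_cube x, in_cube y & proj s n (fmap i x) = proj s n (fmap j y)]).

Definition Iidx (s : 'S_sdim) (n : nat) (j : 'I_(N S)) : bool :=
  if n == sdim then true
  else [forall i : 'I_(N S), (i < j)%N ==> ~~ `[< overlap_exactly s n i j >]].

(* Pi_n^sigma j : the element of I_n^sigma overlapping exactly with j on E_n^sigma,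
   i.e. the least index overlapping exactly with j (identity for n = d). *)
Definition Pidx (s : 'S_sdim) (n : nat) (j : 'I_(N S)) : 'I_(N S) :=
  if n == sdim then j
  else [arg min_(i < j | `[< overlap_exactly s n i j >]) (i : nat)].

(* p_n^sigma; p_0^sigma(emptyset) = 1 (argument ignored for n = 0). *)
Definition pn (p : 'I_(N S) -> R) (s : 'S_sdim) (n : nat) (i : 'I_(N S)) : R :=
  if n == 0%N then 1 else \sum_(j | Pidx s n j == i) p j.

Definition Pcond (p : 'I_(N S) -> R) (s : 'S_sdim) (m : nat) (i : 'I_(N S)) : R :=
  pn p s m.+1 i / pn p s m (Pidx s m i).

(* All terms are >= 0 under the standing assumptions, so the finite max over the
   nonempty set I_n is taken with neutral element 0. *)
Definition Sbar (p : 'I_(N S) -> R) (s : 'S_sdim) : R :=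
  \sum_(k < sdim)
    \big[Num.max/0]_(i | Iidx s k.+1 i) (ln (Pcond p s k i) / ln (lam S i (s k))).

End Sponge.

(* Main.v *)
Require Import Defs.
From HB Require Import structures.
From mathcomp Require Import all_boot all_order all_algebra.
From mathcomp Require Import fingroup perm.
From mathcomp Require Import boolp reals exp.
From mathcomp Require Import lra zify.
Import Order.TTheory GRing.Theory Num.Theory.
Local Open Scope ring_scope.

Definition lamv (R : realType) (i : 'I_2) (c : 'I_4) : R :=
  if (i : nat) == 0%N then
    match (c : nat) with 0%N => 2/5 | 1%N => 1/4 | 2%N => 1/4 | _ => 1/8 end
  else
    match (c : nat) with 0%N => 1/2 | 1%N => 1/4 | 2%N => 1/3 | _ => 1/8 end.

Definition trv (R : realType) (i : 'I_2) (c : 'I_4) : R :=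
  if (i : nat) == 0%N then 0 else 1/2.

Definition SS (R : realType) : IFS R := @MkIFS R 2 (@lamv R) (@trv R).

Definition o0 : 'I_4 := @Ordinal 4 0 isT.
Definition o1 : 'I_4 := @Ordinal 4 1 isT.
Definition o2 : 'I_4 := @Ordinal 4 2 isT.
Definition o3 : 'I_4 := @Ordinal 4 3 isT.
Definition i0 : 'I_2 := @Ordinal 2 0 isT.
Definition i1 : 'I_2 := @Ordinal 2 1 isT.

Lemma ord4P (a : 'I_4) : [\/ a = o0, a = o1, a = o2 | a = o3].
Proof.
case: a => [[|[|[|[|a]]]] Ha] //.
- by constructor 1; apply/val_inj.
- by constructor 2; apply/val_inj.
- by constructor 3; apply/val_inj.
- by constructor 4; apply/val_inj.
Qed.

Lemma ord2P (i : 'I_2) : i = i0 \/ i = i1.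
Proof.
case: i => [[|[|i]] Hi] //.
- by left; apply/val_inj.
- by right; apply/val_inj.
Qed.

Lemma lam_bnd (R : realType) (i : 'I_2) (c : 'I_4) : 0 < lamv R i c < 1.
Proof.
by case: (ord2P i) => ->; case: (ord4P c) => ->; rewrite /lamv /=; apply/andP; split; lra.
Qed.

Lemma lam0_le (R : realType) (c : 'I_4) : lamv R i0 c <= 2/5.
Proof. by case: (ord4P c) => ->; rewrite /lamv /=; lra. Qed.

Lemma cyl_pos (R : realType) (w : nat -> 'I_2) c L : 0 < @cylprod _ (SS R) w c L.
Proof. by rewrite /cylprod; apply: prodr_gt0 => l _; case/andP: (lam_bnd R (w l) c). Qed.

Lemma cyl_anti (R : realType) (w : nat -> 'I_2) c L L' :
  (L <= L')%N -> @cylprod _ (SS R) w c L' <= @cylprod _ (SS R) w c L.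
Proof.
move=> /subnK <-; elim: (L' - L)%N => [|k IH]; first by rewrite add0n.
rewrite addSn (le_trans _ IH) // /cylprod big_ord_recr /=.
have := cyl_pos R w c (k + L)%N; rewrite /cylprod => hp.
case/andP: (lam_bnd R (w (k + L)%N) c) => h1 h2.
by rewrite ger_pMr // ltW.
Qed.

Lemma cyl_dom (R : realType) (w : nat -> 'I_2) c c' L :
  (forall i, lamv R i c <= lamv R i c') -> @cylprod _ (SS R) w c L <= @cylprod _ (SS R) w c' L.
Proof.
move=> h; rewrite /cylprod; apply: ler_prod => l _.
by rewrite h andbT; case/andP: (lam_bnd R (w l) c) => h1 _; apply: ltW.
Qed.

Lemma L_dom (R : realType) (w : nat -> 'I_2) r c c' Lc Lc' :
  @isL _ (SS R) w r c Lc -> @isL _ (SS R) w r c' Lc' ->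
  (forall L, @cylprod _ (SS R) w c L <= @cylprod _ (SS R) w c' L) -> (Lc <= Lc')%N.
Proof.
move=> [hc0 /andP[hc1 hc2]] [hc0' /andP[hc1' hc2']] hd.
rewrite leqNgt; apply/negP => hlt.
have h1 : @cylprod _ (SS R) w c Lc.-1 <= @cylprod _ (SS R) w c Lc'.
  by apply: cyl_anti; rewrite -ltnS prednK.
have := le_trans h1 (le_trans (hd Lc') hc1').
by rewrite leNgt hc2.
Qed.

Lemma lam1_le (R : realType) (c : 'I_4) : lamv R i1 c <= 1/2.
Proof. by case: (ord4P c) => ->; rewrite /lamv /=; lra. Qed.

Lemma fmapE (R : realType) (i : 'I_2) (x : pt R) c :
  @fmap _ (SS R) i x c = lamv R i c * x c + trv R i c.
Proof. by []. Qed.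

Lemma fmap0_bnd (R : realType) (x : pt R) c : in_cube x ->
  0 <= @fmap _ (SS R) i0 x c <= 2/5.
Proof.
move=> /(_ c) /andP[h1 h2]; rewrite fmapE /trv /= addr0.
have := lam0_le R c; case/andP: (lam_bnd R i0 c) => l1 l2 l3.
apply/andP; split; nra.
Qed.

Lemma fmap1_bnd (R : realType) (x : pt R) c : in_cube x ->
  1/2 <= @fmap _ (SS R) i1 x c <= 1.
Proof.
move=> /(_ c) /andP[h1 h2]; rewrite fmapE /trv /=.
have := lam1_le R c; case/andP: (lam_bnd R i1 c) => l1 l2 l3.
apply/andP; split; nra.
Qed.

Lemma zero_cube (R : realType) : in_cube (fun _ : 'I_4 => (0 : R)).
Proof. by move=> c; rewrite lexx ler01. Qed.

Lemma SS_sponge (R : realType) : sponge_assumptions (SS R).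
Proof.
split.
- exact: lam_bnd.
- move=> i x hx c; case: (ord2P i) => ->.
    by have /andP[h1 h2] := fmap0_bnd R x c hx; rewrite h1 /=; lra.
  by have /andP[h1 h2] := fmap1_bnd R x c hx; rewrite h2 andbT; lra.
- move=> i j hij h.
  have := congr1 (fun f => f o0) (h _ (zero_cube R)).
  rewrite !fmapE !mulr0 !add0r /trv.
  case: (ord2P i) hij => ->; case: (ord2P j) => -> //= _; lra.
- move=> m n hmn.
  case: (ord4P m) hmn => ->; case: (ord4P n) => -> //= _;
    first [ by exists i0; rewrite /lamv /=; apply/eqP; lra
          | by exists i1; rewrite /lamv /=; apply/eqP; lra ].
Qed.

Lemma no_overlap (R : realType) s n (i j : 'I_2) : (0 < n)%N ->
  @overlap_exactly _ (SS R) s n i j -> i = j.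
Proof.
move=> hn h; have := congr1 (fun f => f (s o0)) (h _ (zero_cube R)).
rewrite /proj permK /= hn !fmapE !mulr0 !add0r /trv.
case: (ord2P i) => ->; case: (ord2P j) => -> //= heq; exfalso; lra.
Qed.

Lemma SS_SPPC (R : realType) : very_strong_SPPC (SS R).
Proof.
move=> s _ n /andP[hn _] i j.
case: (ord2P i) => ->; case: (ord2P j) => ->; try by left.
- right=> -[x [y [hx hy he]]].
  have := congr1 (fun f => f (s o0)) he; rewrite /proj permK /= hn.
  have /andP[a1 a2] := fmap0_bnd R x (s o0) hx; have /andP[b1 b2] := fmap1_bnd R y (s o0) hy.
  lra.
- right=> -[x [y [hx hy he]]].
  have := congr1 (fun f => f (s o0)) he; rewrite /proj permK /= hn.
  have /andP[a1 a2] := fmap0_bnd R y (s o0) hy; have /andP[b1 b2] := fmap1_bnd R x (s o0) hx.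
  lra.
Qed.

Lemma Pidx_id (R : realType) s n (j : 'I_2) : (0 < n)%N -> @Pidx _ (SS R) s n j = j.
Proof.
move=> hn; rewrite /Pidx; case: eqP => // _.
case: arg_minnP => [|i hi _]; first by apply/asboolP => x _.
by move/asboolP: hi => /(@no_overlap R _ _ _ _ hn).
Qed.

Lemma Iidx_T (R : realType) s n (j : 'I_2) : (0 < n)%N -> @Iidx _ (SS R) s n j.
Proof.
move=> hn; rewrite /Iidx; case: eqP => // _.
apply/forallP => i; apply/implyP => hij; apply/negP => /asboolP /(@no_overlap R _ _ _ _ hn) eq.
by subst; rewrite ltnn in hij.
Qed.

Lemma pn_id (R : realType) (p : 'I_2 -> R) s n i : (0 < n)%N -> @pn _ (SS R) p s n i = p i.
Proof.
move=> hn; rewrite /pn; case: eqP => [e|_]; first by rewrite e in hn.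
rewrite (eq_bigl (fun j => j == i)) ?big_pred1_eq // => j.
by rewrite Pidx_id.
Qed.

Lemma Pcond0 (R : realType) (p : 'I_2 -> R) s i : @Pcond _ (SS R) p s 0 i = p i.
Proof. by rewrite /Pcond pn_id // /pn eqxx divr1. Qed.

Lemma PcondS (R : realType) (p : 'I_2 -> R) s m i : p i != 0 -> @Pcond _ (SS R) p s m.+1 i = 1.
Proof. by move=> hp; rewrite /Pcond !pn_id // Pidx_id // divff. Qed.

Definition G (R : realType) (p : 'I_2 -> R) (c : 'I_4) : R :=
  \big[Num.max/0]_(i : 'I_2) (ln (p i) / ln (lamv R i c)).
Arguments G {R}.

Lemma SbarE (R : realType) (p : 'I_2 -> R) s : (forall i, 0 < p i) ->
  @Sbar _ (SS R) p s = G p (s o0).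
Proof.
move=> hp; rewrite /Sbar big_ord_recl big1 ?addr0.
  have -> : (ord0 : 'I_4) = o0 by apply/val_inj.
  rewrite /G; apply: eq_big => i; first by rewrite Iidx_T.
  by rewrite Pcond0.
move=> k _; apply: (big_ind (fun x => x = 0)) => // [x y -> ->|i _]; first by rewrite maxxx.
by rewrite lift0 PcondS ?ln1 ?mul0r // gt_eqF.
Qed.

Lemma bigmax_const (R : realType) (T : finType) (P : pred T) (c : R) x0 :
  P x0 -> \big[Num.max/0]_(x | P x) c = Num.max 0 c.
Proof.
move=> hx0; rewrite big_const_seq.
have : (0 < count P (index_enum T))%N.
  by rewrite -has_count; apply/hasP; exists x0 => //; exact: mem_index_enum.
elim: (count P _) => [//|[|n] IH _]; first by rewrite /= maxC.
by rewrite iterS IH // maxC -maxA maxxx.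
Qed.

Lemma lam_dom0 (R : realType) i c : lamv R i c <= lamv R i o0.
Proof. by case: (ord2P i) => ->; case: (ord4P c) => ->; rewrite /lamv /=; lra. Qed.

Lemma A_s0 (R : realType) s : in_A (SS R) s -> s o0 = o0.
Proof.
move=> [w [r [_ [Ls [hL hord htie]]]]].
apply/eqP; apply/negPn/negP => hne.
set c := s o0 in hne.
set a := (s^-1)%g o0.
have ha : a != o0.
  apply/eqP => e; move/eqP: hne; apply.
  by rewrite /c -e /a permKV.
have ha0 : (o0 < a)%N by rewrite lt0n; apply: contra ha => /eqP h; apply/eqP/val_inj.
have h1 : (Ls o0 <= Ls c)%N by have := hord o0 a ha0; rewrite /a permKV.
have h2 : (Ls c <= Ls o0)%N.
  by apply: (@L_dom R w r c o0 (Ls c) (Ls o0) (hL c) (hL o0)) => L; apply: cyl_dom => i; exact: lam_dom0.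
have he : Ls o0 = Ls c by apply/eqP; rewrite eqn_leq h1 h2.
have hc : (o0 < c)%N by rewrite lt0n; apply: contra hne => /eqP h; apply/eqP/val_inj.
have [_ H] := htie o0 c hc he.
have := H (@cyl_dom R w c o0 _ (fun i => lam_dom0 R i c)).
by rewrite /c permK ltn0.
Qed.

Lemma id_notB (R : realType) : ~ in_B (SS R) 1%g.
Proof.
move=> [w [r [_ [L [_ hlt]]]]].
have := hlt o1 o2 isT; rewrite !perm1.
have := @cyl_dom R w o1 o2 L.
move=> h; rewrite ltNge h //.
by move=> i; case: (ord2P i) => ->; rewrite /lamv /=; lra.
Qed.

Definition rho (c : 'I_4) : nat :=
  match (c : nat) with 0%N => 3 | 1%N => 1 | 2%N => 2 | _ => 0 end%N.

Lemma rho_dom (R : realType) i c c' : (rho c <= rho c')%N -> lamv R i c <= lamv R i c'.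
Proof.
by case: (ord2P i) => ->; case: (ord4P c) => ->; case: (ord4P c') => -> //;
  rewrite /lamv /= => _; lra.
Qed.

Lemma rho_val (c : 'I_4) : [/\ (rho c = 3 -> c = o0), (rho c = 2 -> c = o2),
  (rho c = 1 -> c = o1) & (rho c = 0 -> c = o3)]%N.
Proof. by case: (ord4P c) => ->; split. Qed.

Lemma rho_lt (c : 'I_4) : (rho c < 4)%N.
Proof. by case: (ord4P c) => ->. Qed.

Lemma tpE : [/\ tperm o1 o2 o0 = o0, tperm o1 o2 o1 = o2,
  tperm o1 o2 o2 = o1 & tperm o1 o2 o3 = o3].
Proof. by rewrite tpermL tpermR !tpermD. Qed.

Lemma B_tperm (R : realType) s : in_B (SS R) s -> s = tperm o1 o2.
Proof.
move=> [w [r [_ [L [_ hlt]]]]].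
have hr : forall a b : 'I_4, (a < b)%N -> (rho (s b) < rho (s a))%N.
  move=> a b hab; rewrite ltnNge; apply/negP => hle.
  have := hlt a b hab; rewrite ltNge (@cyl_dom R w (s a) (s b) L) //.
  by move=> i; exact: rho_dom.
have r01 := hr o0 o1 isT; have r12 := hr o1 o2 isT; have r23 := hr o2 o3 isT.
have l0 := rho_lt (s o0).
have e0 : rho (s o0) = 3%N by lia.
have e1 : rho (s o1) = 2%N by lia.
have e2 : rho (s o2) = 1%N by lia.
have e3 : rho (s o3) = 0%N by lia.
have [t0 t1 t2 t3] := tpE.
apply/permP => a; case: (ord4P a) => ->.
- by rewrite t0; case: (rho_val (s o0)) => h _ _ _; exact: h.
- by rewrite t1; case: (rho_val (s o1)) => _ h _ _; exact: h.
- by rewrite t2; case: (rho_val (s o2)) => _ _ h _; exact: h.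
- by rewrite t3; case: (rho_val (s o3)) => _ _ _ h; exact: h.
Qed.

Lemma cylC (R : realType) (i : 'I_2) c L :
  @cylprod _ (SS R) (fun _ => i) c L = lamv R i c ^+ L.
Proof. by rewrite /cylprod prodr_const card_ord. Qed.

Definition Ls1 (c : 'I_4) : nat :=
  match (c : nat) with 0%N => 3 | 1%N => 2 | 2%N => 2 | _ => 1 end%N.

Lemma tperm_A (R : realType) : in_A (SS R) (tperm o1 o2).
Proof.
exists (fun _ => i1), (1/8); split; first lra.
have [t0 t1 t2 t3] := tpE.
exists Ls1; split.
- move=> c; split; first by case: (ord4P c) => ->.
  rewrite !cylC; case: (ord4P c) => ->; rewrite /lamv /= !exprS ?expr0;
    apply/andP; split; lra.
- move=> a b; case: (ord4P a) => ->; case: (ord4P b) => -> //;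
    by rewrite ?t0 ?t1 ?t2 ?t3.
- move=> k m; case: (ord4P k) => ->; case: (ord4P m) => -> //= _ _.
  rewrite tpermV t1 t2 !cylC /lamv /= !exprS ?expr0; split => //; lra.
Qed.

Lemma id_A (R : realType) : in_A (SS R) 1%g.
Proof.
exists (fun _ => i0), (1/4); split; first lra.
exists (fun c : 'I_4 => if (c : nat) == 0%N then 2%N else 1%N); split.
- move=> c; split; first by case: (ord4P c) => ->.
  rewrite !cylC; case: (ord4P c) => ->; rewrite /lamv /= !exprS ?expr0;
    apply/andP; split; lra.
- by move=> a b; case: (ord4P a) => ->; case: (ord4P b) => -> //; rewrite !perm1.
- move=> k m; case: (ord4P k) => ->; case: (ord4P m) => -> //= _ _;
  rewrite invg1 !perm1 !cylC /lamv /= !exprS ?expr0; split => // _; lra.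
Qed.

Lemma tperm_B (R : realType) : in_B (SS R) (tperm o1 o2).
Proof.
exists (fun _ => i1), (1/8); split; first lra.
have [t0 t1 t2 t3] := tpE.
exists 1%N; split.
- have -> : (ord_max : 'I_4) = o3 by apply/val_inj.
  rewrite t3; split => //; rewrite !cylC /lamv /= expr1 expr0; apply/andP; split; lra.
- move=> a b; case: (ord4P a) => ->; case: (ord4P b) => -> //= _;
    rewrite ?t0 ?t1 ?t2 ?t3 !cylC /lamv /= !expr1; lra.
Qed.

Theorem proposition3p4 (R : realType) :
  exists S : IFS R,
    [/\ sponge_assumptions S,
        very_strong_SPPC S,
        (forall s, in_B S s -> in_A S s) /\ (exists s, in_A S s /\ ~ in_B S s) &
        forall p : 'I_(N S) -> R,
          (forall i, 0 < p i) -> \sum_i p i = 1 ->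
          \big[Num.max/0]_(s : 'S_sdim | `[< in_B S s >]) Sbar p s =
          \big[Num.max/0]_(s : 'S_sdim | `[< in_A S s >]) Sbar p s].
Proof.
exists (SS R); split.
- exact: SS_sponge.
- exact: SS_SPPC.
- split; first by move=> s /B_tperm ->; exact: tperm_A.
  by exists 1%g; split; [exact: id_A | exact: id_notB].
move=> p hp _.
have hB : forall s : 'S_sdim, `[< in_B (SS R) s >] -> @Sbar _ (SS R) p s = G p o0.
  move=> s /asboolP /B_tperm ->; rewrite SbarE //; have [-> _ _ _] := tpE; by [].
have hA : forall s : 'S_sdim, `[< in_A (SS R) s >] -> @Sbar _ (SS R) p s = G p o0.
  by move=> s /asboolP /A_s0 e; rewrite SbarE // e.
rewrite (eq_bigr _ hB) (eq_bigr _ hA).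
rewrite (@bigmax_const R _ _ _ (tperm o1 o2)); last by apply/asboolP; exact: tperm_B.
by rewrite (@bigmax_const R _ _ _ 1%g) //; apply/asboolP; exact: id_A.
Qed.
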